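(* Let $A\in\mathbb{R}^{n\times n}$, $B\in\mathbb{R}^{n\times m}$, $L\in\mathbb{R}^{n\times m}$, $R\in\mathbb{R}^{m\times m}$ with $R$ symmetric positive definite, and $A_0^i\in\mathbb{R}^{n\times n}$, $B_0^i\in\mathbb{R}^{n\times m}$ for $i=1,\dots,r$. If the pair $(A,B)$ is stabilizable, then for every symmetric positive semidefinite $\widetilde X\in\mathbb{R}^{n\times n}$ the pair $\big(A_{\mathrm c}(\widetilde X),\,G_{\mathrm c}(\widetilde X)\big)$ is stabilizable, where $A_{\mathrm c}(X)=A-B\,[R_{\mathrm c}(X)]^{-1}[L_{\mathrm c}(X)]^{\mathsf T}$, $G_{\mathrm c}(X)=B\,[R_{\mathrm c}(X)]^{-1}B^{\mathsf T}$, $L_{\mathrm c}(X)=L+\sum_{i=1}^r (A_0^i)^{\mathsf T}XB_0^i$, $R_{\mathrm c}(X)=R+\sum_{i=1}^r (B_0^i)^{\mathsf T}XB_0^i$.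
   Context: A pair $(A,G)$ with $A,G\in\mathbb{R}^{n\times n}$ (or $(A,B)$ with $B\in\mathbb{R}^{n\times m}$) is stabilizable if there is no nonzero $y\in\mathbb{C}^n$ and $\lambda\in\mathbb{C}$ with $\mathrm{Re}(\lambda)\ge 0$ such that $y^{\mathsf H}[A-\lambda I,\ G]=0$ (resp. $y^{\mathsf H}[A-\lambda I,\ B]=0$). For $X\succeq 0$, $R_{\mathrm c}(X)\succeq R\succ 0$ is invertible. *)

(* Defs.v *)
From HB Require Import structures.
From mathcomp Require Import all_boot all_order all_algebra.
From mathcomp Require Import complex.
Set Implicit Arguments. Unset Strict Implicit. Unset Printing Implicit Defensive.
Import Order.TTheory GRing.Theory Num.Theory.
Local Open Scope ring_scope.

Definition cmx (R : rcfType) (p q : nat) (M : 'M[R]_(p, q)) : 'M[R[i]]_(p, q) :=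
  map_mx (fun x => (x%:C)%C) M.

Definition ctmx (R : rcfType) (p q : nat) (M : 'M[R[i]]_(p, q)) : 'M[R[i]]_(q, p) :=
  (map_mx (@conjc R) M)^T.

Definition stabilizable (R : rcfType) (n k : nat)
    (A : 'M[R]_n) (G : 'M[R]_(n, k)) : Prop :=
  ~ exists (y : 'cV[R[i]]_n) (lam : R[i]),
      [/\ y != 0, 0 <= complex.Re lam &
          ctmx y *m row_mx (cmx A - lam%:M) (cmx G) = 0].

Definition symmetricmx (R : rcfType) (n : nat) (M : 'M[R]_n) : Prop := M^T = M.

Definition posdef (R : rcfType) (n : nat) (M : 'M[R]_n) : Prop :=
  symmetricmx M /\ forall x : 'cV[R]_n, x != 0 -> 0 < (x^T *m M *m x) 0 0.

Definition psd (R : rcfType) (n : nat) (M : 'M[R]_n) : Prop :=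
  symmetricmx M /\ forall x : 'cV[R]_n, 0 <= (x^T *m M *m x) 0 0.

Section Riccati.
Variables (R : rcfType) (n m r : nat).
Variables (A : 'M[R]_n) (B L : 'M[R]_(n, m)) (Rw : 'M[R]_m)
          (A0 : 'I_r -> 'M[R]_n) (B0 : 'I_r -> 'M[R]_(n, m)).

Definition Lc (X : 'M[R]_n) : 'M[R]_(n, m) :=
  L + \sum_(i < r) (A0 i)^T *m X *m B0 i.
Definition Rc (X : 'M[R]_n) : 'M[R]_m :=
  Rw + \sum_(i < r) (B0 i)^T *m X *m B0 i.
Definition Ac (X : 'M[R]_n) : 'M[R]_n :=
  A - B *m invmx (Rc X) *m (Lc X)^T.
Definition Gc (X : 'M[R]_n) : 'M[R]_n :=
  B *m invmx (Rc X) *m B^T.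
End Riccati.

(* Main.v *)
Require Import Defs.
From mathcomp Require Import all_boot all_order all_algebra.
From mathcomp Require Import complex ring lra.
Import Order.TTheory GRing.Theory Num.Theory.
Local Open Scope ring_scope.
Section S.
Variable R : rcfType.
Lemma Re_sum k (f : 'I_k -> R[i]) : complex.Re (\sum_(i < k) f i) = \sum_(i < k) complex.Re (f i).
Proof. by elim/big_rec2: _ => // i x y _ <-; case: (f i); case: y. Qed.
Lemma posdef_c k (M : 'M[R]_k) (u : 'rV[R[i]]_k) : posdef M ->
  u *m cmx M *m ctmx u = 0 -> u = 0.
Proof.
move=> [_ pM] H.
set a := map_mx (@complex.Re R) u; set b := map_mx (@complex.Im R) u.
have E: complex.Re ((u *m cmx M *m ctmx u) 0 0) = (a *m M *m a^T) 0 0 + (b *m M *m b^T) 0 0.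
  rewrite !mxE Re_sum -big_split /=; apply: eq_bigr => j _.
  rewrite !mxE !big_distrl Re_sum -big_split /=; apply: eq_bigr => i _.
  rewrite !mxE; case: (u 0 i) => p q; case: (u 0 j) => p' q' /=; ring.
have ge0 (v : 'rV[R]_k) : 0 <= (v *m M *m v^T) 0 0.
  have [->|nz] := eqVneq v 0; first by rewrite !mul0mx mxE.
  have := pM v^T; rewrite trmxK; move/(_ _)/ltW; apply.
  by apply: contra nz => /eqP /(congr1 trmx); rewrite trmxK trmx0 => ->.
have pos (v : 'rV[R]_k) : (v *m M *m v^T) 0 0 = 0 -> v = 0.
  move=> h; apply/eqP; apply: contraT => nz.
  have := pM v^T; rewrite trmxK h ltxx; apply.
  by apply: contra nz => /eqP /(congr1 trmx); rewrite trmxK trmx0 => ->.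
rewrite H mxE /= in E.
have ha := ge0 a; have hb := ge0 b.
have a0 : a = 0 by apply: pos; lra.
have b0 : b = 0 by apply: pos; lra.
apply/matrixP => i j; have := congr1 (fun m : 'M[R]_(1,k) => m i j) a0; have := congr1 (fun m : 'M[R]_(1,k) => m i j) b0.
rewrite !mxE; case: (u i j) => p q /= -> ->; done.
Qed.
Lemma cmxM p q s (P : 'M[R]_(p,q)) (Q : 'M[R]_(q,s)) : cmx (P *m Q) = cmx P *m cmx Q.
Proof. exact: (map_mxM (real_complex R)). Qed.
Lemma cmxB p q (P Q : 'M[R]_(p,q)) : cmx (P - Q) = cmx P - cmx Q.
Proof. exact: (map_mxB (real_complex R)). Qed.
Lemma cmxT p q (P : 'M[R]_(p,q)) : cmx P^T = (cmx P)^T.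
Proof. by apply/matrixP=> i j; rewrite !mxE. Qed.
Lemma ctmxM p q s (P : 'M[R[i]]_(p,q)) (Q : 'M[R[i]]_(q,s)) : ctmx (P *m Q) = ctmx Q *m ctmx P.
Proof. by rewrite /ctmx (map_mxM (@conjc R)) trmx_mul. Qed.
Lemma ctmx_cmx p q (P : 'M[R]_(p,q)) : ctmx (cmx P) = cmx P^T.
Proof. by apply/matrixP=> i j; rewrite !mxE conjc_real. Qed.
Lemma ctmxK p q (P : 'M[R[i]]_(p,q)) : ctmx (ctmx P) = P.
Proof. by apply/matrixP=> i j; rewrite !mxE conjcK. Qed.
Lemma cmx1 k : cmx (1%:M : 'M[R]_k) = 1%:M.
Proof. by apply/matrixP=> i j; rewrite !mxE; case: (i == j); rewrite //= mulr1n. Qed.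
Lemma Rc_posdef n m r (B0 : 'I_r -> 'M[R]_(n, m)) (Rw : 'M[R]_m) (X : 'M[R]_n) :
  posdef Rw -> psd X -> posdef (Rc Rw B0 X).
Proof.
move=> [sR pR] [sX pX]; split.
  unfold Defs.symmetricmx, Rc; rewrite (raddfD (@trmx R m m)) /= (raddf_sum (@trmx R m m)) /= sR; congr (_ + _).
  by apply: eq_bigr => i _; rewrite !trmx_mul trmxK sX mulmxA.
move=> x nz; rewrite /Rc mulmxDr mulmxDl mxE.
apply: (lt_le_trans (pR x nz)); rewrite lerDl.
rewrite mulmx_sumr mulmx_suml summxE; apply: sumr_ge0 => i _.
have -> : x^T *m ((B0 i)^T *m X *m B0 i) *m x = (B0 i *m x)^T *m X *m (B0 i *m x).
  by rewrite trmx_mul !mulmxA.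
exact: pX.
Qed.
End S.

Theorem lemma2p1 (R : rcfType) (n m r : nat)
    (A : 'M[R]_n) (B L : 'M[R]_(n, m)) (Rw : 'M[R]_m)
    (A0 : 'I_r -> 'M[R]_n) (B0 : 'I_r -> 'M[R]_(n, m)) :
  posdef Rw ->
  stabilizable A B ->
  forall Xt : 'M[R]_n, psd Xt ->
    stabilizable (Ac A B L Rw A0 B0 Xt) (Gc B Rw B0 Xt).
Proof.
move=> PR stab X psdX [y [lam [ynz Hre H]]].
have PRc := @Rc_posdef R n m r B0 Rw X PR psdX.
have U : Rc Rw B0 X \in unitmx.
  rewrite unitmxE unitfE; apply/det0P => [[v vnz vR]].
  suff: v^T != 0 by move/(PRc.2 v^T); rewrite trmxK vR mul0mx mxE ltxx.
  by apply: contra vnz => /eqP /(congr1 trmx); rewrite trmxK trmx0 => ->.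
rewrite mul_mx_row -row_mx0 in H; case/eq_row_mx: H => H1 H2.
have H2' : (ctmx y *m cmx B) *m cmx (invmx (Rc Rw B0 X)) *m ctmx (ctmx y *m cmx B) = 0.
  rewrite ctmxM ctmxK ctmx_cmx !mulmxA.
  by move: H2; rewrite /Gc !cmxM !mulmxA => ->; rewrite mul0mx.
move: H2'.
have zu : ctmx y *m cmx B = (ctmx y *m cmx B *m cmx (invmx (Rc Rw B0 X))) *m cmx (Rc Rw B0 X).
  by rewrite -mulmxA -cmxM mulVmx // cmx1 mulmx1.
move: (ctmx y *m cmx B *m cmx (invmx (Rc Rw B0 X))) zu => u zu.
rewrite zu ctmxM ctmx_cmx PRc.1 mulmxA => /(@posdef_c R m _ u PRc) u0.
have z0 : ctmx y *m cmx B = 0 by rewrite zu u0 mul0mx.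
apply: stab; exists y, lam; split => //.
rewrite mul_mx_row z0; suff -> : ctmx y *m (cmx A - lam%:M) = 0 by rewrite row_mx0.
have E : ctmx y *m cmx (Ac A B L Rw A0 B0 X) = ctmx y *m cmx A.
  rewrite /Ac cmxB 2!cmxM mulmxBr 2!mulmxA z0 2!mul0mx subr0.
  reflexivity.
have h := mulmxBr (ctmx y) (cmx A) (lam%:M).
have h1 := mulmxBr (ctmx y) (cmx (Ac A B L Rw A0 B0 X)) (lam%:M).
rewrite h. Time rewrite h1 E in H1. Time exact H1.
Qed.
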